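(* Let $p\ge3$ be a prime. (1) $\displaystyle \mathrm{ord}_p(\overline{F}_{p^2-1})=\sum_{k=1}^{p-1}\mu(k)\,\mathrm{ord}_p\big(\overline{G}_{\lfloor (p^2-1)/k\rfloor}\big).$ (2) For $1\le k\le p-1$ write $\lfloor (p^2-1)/k\rfloor=a_kp+b_k$ with $0\le a_k,b_k\le p-1$. Then $\mathrm{ord}_p\big(\overline{G}_{\lfloor (p^2-1)/k\rfloor}\big)=a_k(p-1-b_k)$, where $a_k=\lfloor (p-1)/k\rfloor$ and $b_k=\lfloor (p^2-1)/k\rfloor-p\lfloor (p-1)/k\rfloor$. (3) $\displaystyle \mathrm{ord}_p(\overline{F}_{p^2-1})=(p-1)-\sum_{k=1}^{p-1}\mu(k)\Big\lfloor\frac{p-1}{k}\Big\rfloor b_k.$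
   Context: For a positive integer $m$, $\overline{F}_m=\Big(\prod_{1\le h\le k\le m,\ \gcd(h,k)=1}\frac{h}{k}\Big)^{-1}$ (reciprocal of the product of all nonzero Farey fractions of order $m$) and $\overline{G}_m=\Big(\prod_{1\le h\le k\le m}\frac{h}{k}\Big)^{-1}$ (reciprocal of the product of all reduced and unreduced fractions $h/k$ with $1\le h\le k\le m$). For a nonzero rational $x$, $\mathrm{ord}_p(x)$ is the exponent of $p$ in $x$. $\mu$ is the M\''obius function. *)

(* Defs.v *)
From mathcomp Require Import all_boot all_order all_algebra.
Set Implicit Arguments. Unset Strict Implicit. Unset Printing Implicit Defensive.
Import Order.TTheory GRing.Theory Num.Theory.
Local Open Scope ring_scope.

Definition ordp (p : nat) (x : rat) : int :=
  (logn p `|numq x|%N)%:Z - (logn p `|denq x|%N)%:Z.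

Definition mobius (n : nat) : int :=
  if (n > 0)%N && all (fun q => logn q n == 1%N) (primes n)
  then (-1) ^+ size (primes n) else 0.

(* Fbar m = reciprocal of the product of the nonzero Farey fractions of order m *)
Definition Fbar (m : nat) : rat :=
  (\prod_(1 <= k < m.+1) \prod_(1 <= h < k.+1 | coprime h k) (h%:R / k%:R))^-1.

Definition Gbar (m : nat) : rat :=
  (\prod_(1 <= k < m.+1) \prod_(1 <= h < k.+1) (h%:R / k%:R))^-1.

(* Main.v *)
Require Import Defs.
From mathcomp Require Import all_boot all_order all_algebra.
From mathcomp Require Import zify ring.
Import Order.TTheory GRing.Theory Num.Theory.
Local Open Scope ring_scope.

Lemma sum_dvd_reindex (X : nat -> int) d N : (0 < d)%N ->
  \sum_(1 <= n < N.+1 | (d %| n)%N) X n = \sum_(1 <= e < (N %/ d).+1) X (d * e)%N.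
Proof.
move=> d0; elim: N => [|N IH]; first by rewrite div0n !big_geq.
rewrite big_mkcond big_nat_recr //= -big_mkcond IH divnS //.
case: (boolP (d %| N.+1)%N) => H.
  rewrite add1n [in RHS]big_nat_recr //=; congr (_ + _).
  have E: (N %/ d).+1 = (N.+1 %/ d)%N by rewrite divnS // H.
  by rewrite E mulnC divnK.
by rewrite add0n addr0.
Qed.

Lemma mobius0 : mobius 0 = 0. Proof. by []. Qed.

Lemma mobius_sq q x : prime q -> (q %| x)%N -> mobius (q * x) = 0.
Proof.
move=> pq qx; have [->|x0] := posnP x; first by rewrite muln0.
rewrite /mobius; have qx0 : (0 < q * x)%N by rewrite muln_gt0 prime_gt0.
rewrite qx0 /=.
have qin : q \in primes (q * x) by rewrite mem_primes pq qx0 dvdn_mulr.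
have : logn q (q * x) != 1%N.
  rewrite (lognM _ (prime_gt0 pq) x0) (logn_prime q pq) eqxx.
  have : (0 < logn q x)%N by rewrite logn_gt0 mem_primes pq x0 qx.
  by move=> h; apply/eqP; lia.
move=> ne; case: ifP => // /allP /(_ q qin) /eqP E.
by rewrite E in ne.
Qed.

Lemma mobius_prime q x : prime q -> ~~ (q %| x)%N -> mobius (q * x) = - mobius x.
Proof.
move=> pq qx; have [->|x0] := posnP x; first by rewrite muln0 mobius0 oppr0.
have qx0 : (0 < q * x)%N by rewrite muln_gt0 prime_gt0.
have qnin : q \notin primes x by rewrite mem_primes pq x0.
have pe : perm_eq (primes (q * x)) (q :: primes x).
  apply: uniq_perm; first exact: primes_uniq.
    by rewrite /= qnin primes_uniq.
  move=> r; rewrite (primesM _ (prime_gt0 pq) x0) primes_prime // !inE.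
  by [].
rewrite /mobius qx0 x0 /= (perm_all _ pe) (perm_size pe) /=.
rewrite (lognM _ (prime_gt0 pq) x0) (logn_prime q pq) eqxx.
rewrite (logn_coprime (m := x)) ?prime_coprime // addn0 eqxx /=.
have -> : all (fun q0 => logn q0 (q * x) == 1%N) (primes x) =
          all (fun q0 => logn q0 x == 1%N) (primes x).
  apply: eq_in_all => r rin.
  have rq : r != q by apply: contraNneq qnin => <-.
  rewrite (lognM _ (prime_gt0 pq) x0) (logn_prime r pq) (negbTE rq).
  by [].
by case: ifP => _; rewrite ?oppr0 // exprS mulN1r.
Qed.

Lemma widen_dvd (f : nat -> int) (P : pred nat) m N : (0 < m)%N -> (m <= N)%N ->
  \sum_(1 <= d < N.+1 | (d %| m)%N && P d) f d =
  \sum_(1 <= d < m.+1 | (d %| m)%N && P d) f d.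
Proof.
move=> m0 mN; rewrite (big_cat_nat _ (n:=m.+1)) //=.
rewrite [X in _ + X]big1_seq ?addr0 // => d /andP[/andP[dm _]].
rewrite mem_index_iota => /andP[h _]; have := dvdn_leq m0 dm; lia.
Qed.

Lemma mobius_sum n N : (0 < n)%N -> (n <= N)%N ->
  \sum_(1 <= d < N.+1 | (d %| n)%N) mobius d = (n == 1%N)%:R.
Proof.
move=> n0 nN.
have E1 : forall N', \sum_(1 <= d < N'.+1 | (d %| n)%N) mobius d =
                   \sum_(1 <= d < N'.+1 | (d %| n)%N && true) mobius d.
  by move=> N'; apply: eq_bigl => d; rewrite andbT.
rewrite E1 widen_dvd // -E1.
case: (ltngtP n 1) => [|n1|->]; first by lia.
  have pq := pdiv_prime n1; have qn := pdiv_dvd n.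
  set q := pdiv n in pq qn *.
  set n' := (n %/ q)%N.
  have En : n = (q * n')%N by rewrite mulnC divnK.
  have n'0 : (0 < n')%N by move: n0; rewrite En muln_gt0 => /andP[].
  have n'n : (n' <= n)%N by rewrite En leq_pmull // prime_gt0.
  rewrite (bigID (fun d => q %| d)%N) /=.
  have -> : \sum_(1 <= i < n.+1 | (i %| n)%N && (q %| i)%N) mobius i =
       - \sum_(1 <= e < n'.+1 | (e %| n')%N && ~~ (q %| e)%N) mobius e.
    rewrite (eq_bigl (fun i => (q %| i)%N && (i %| n)%N)); last by move=> i; rewrite andbC.
    rewrite big_mkcondr sum_dvd_reindex ?prime_gt0 // -/n' -sumrN.
    rewrite [RHS]big_mkcond; apply: eq_bigr => e _.
    rewrite {1}En dvdn_pmul2l ?prime_gt0 //.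
    case: (e %| n')%N => //=; case: (boolP (q %| e)%N) => qe /=.
      by rewrite mobius_sq.
    by rewrite mobius_prime.
  have -> : \sum_(1 <= i < n.+1 | (i %| n)%N && ~~ (q %| i)%N) mobius i =
       \sum_(1 <= e < n'.+1 | (e %| n')%N && ~~ (q %| e)%N) mobius e.
    rewrite -(@widen_dvd _ _ n' n n'0 n'n); apply: eq_bigl => i.
    case: (boolP (q %| i)%N) => qi; rewrite ?andbF ?andbT //.
    rewrite {1}En Gauss_dvdr // coprime_sym prime_coprime //.
  by rewrite addNr.
by rewrite big_mkcond big_nat1.
Qed.

Lemma inversion (F G : nat -> int) :
  (forall m, G m = \sum_(1 <= d < m.+1) F (m %/ d)%N) -> F 0%N = 0 ->
  forall N, F N = \sum_(1 <= d < N.+1) mobius d * G (N %/ d)%N.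
Proof.
move=> HG F0 N.
have [->|N0] := posnP N; first by rewrite big_geq.
transitivity (\sum_(1 <= n < N.+1)
   F (N %/ n)%N * \sum_(1 <= d < N.+1 | (d %| n)%N) mobius d).
  rewrite big_nat_recl //= divn1 mobius_sum // eqxx mulr1 big1_seq ?addr0 //.
  move=> n /andP[_]; rewrite mem_index_iota => /andP[h1 h2].
  by rewrite mobius_sum //; lia.
symmetry.
transitivity (\sum_(1 <= d < N.+1) \sum_(1 <= n < N.+1 | (d %| n)%N)
                 mobius d * F (N %/ n)%N).
  apply: eq_big_nat => d /andP[d1 dN].
  rewrite HG mulr_sumr sum_dvd_reindex; last by lia.
  by apply: eq_bigr => e _; rewrite divnMA.
under eq_bigr do rewrite big_mkcond /=.
rewrite exchange_big /=; apply: eq_bigr => n _.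
rewrite mulr_sumr [RHS]big_mkcond /=; apply: eq_bigr => d _.
by case: (d %| n)%N; rewrite ?mulr0 // mulrC.
Qed.

Lemma widen_dvd1 (f : nat -> int) m N : (0 < m)%N -> (m <= N)%N ->
  \sum_(1 <= d < N.+1 | (d %| m)%N) f d = \sum_(1 <= d < m.+1 | (d %| m)%N) f d.
Proof.
move=> m0 mN.
have E1 : forall N', \sum_(1 <= d < N'.+1 | (d %| m)%N) f d =
                   \sum_(1 <= d < N'.+1 | (d %| m)%N && true) f d.
  by move=> N'; apply: eq_bigl => d; rewrite andbT.
by rewrite E1 widen_dvd // -E1.
Qed.

Definition w (p h k : nat) : int := (logn p k)%:Z - (logn p h)%:Z.
Definition g1 p k := \sum_(1 <= h < k.+1) w p h k.
Definition f1 p k := \sum_(1 <= h < k.+1 | coprime h k) w p h k.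
Definition Gs p m := \sum_(1 <= k < m.+1) g1 p k.
Definition Fs p m := \sum_(1 <= k < m.+1) f1 p k.

Lemma key p k : (0 < k)%N ->
  g1 p k = \sum_(1 <= d < k.+1 | (d %| k)%N) f1 p (k %/ d).
Proof.
move=> k0; rewrite /g1.
transitivity (\sum_(1 <= h < k.+1) \sum_(1 <= d < k.+1 | (d %| k)%N)
                 (if gcdn h k == d then w p h k else 0)).
  apply: eq_big_nat => h /andP[h1 hk].
  rewrite -big_mkcondr (eq_bigl (fun d => d == gcdn h k)); last first.
    by move=> d; rewrite eq_sym; case: eqP => [->|]; rewrite ?andbF ?dvdn_gcdr.
  rewrite big_nat1_eq.
  have g0 : (0 < gcdn h k)%N by rewrite gcdn_gt0 k0 orbT.
  have gk : (gcdn h k <= k)%N by apply: dvdn_leq k0 (dvdn_gcdr h k).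
  by case: ifP => //; lia.
rewrite exchange_big /= big_seq_cond [RHS]big_seq_cond.
apply: eq_bigr => d /andP[dr dk]; move: dr; rewrite mem_index_iota => /andP[d1 _].
have d0 : (0 < d)%N by lia.
rewrite (bigID (fun h => d %| h)%N) /= [X in _ + X]big1 ?addr0; last first.
  move=> h /negbTE ndh; case: eqP => // E.
  by rewrite -E dvdn_gcdl in ndh.
rewrite sum_dvd_reindex // /f1 [RHS]big_mkcond /=.
set k' := (k %/ d)%N.
have Ek : k = (d * k')%N by rewrite mulnC divnK.
have k'0 : (0 < k')%N by move: k0; rewrite Ek muln_gt0 => /andP[].
apply: eq_big_nat => e /andP[e1 ek].
rewrite [k in gcdn _ k]Ek [k in w _ _ k]Ek -muln_gcdr.
rewrite -{2}(muln1 d) eqn_pmul2l //.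
rewrite /coprime; case: (gcdn e k' == 1)%N => //.
rewrite /w !lognM //.
by rewrite !PoszD opprD addrACA subrr add0r.
Qed.

Lemma GF p m : Gs p m = \sum_(1 <= d < m.+1) Fs p (m %/ d).
Proof.
rewrite /Gs.
transitivity (\sum_(1 <= k < m.+1) \sum_(1 <= d < m.+1 | (d %| k)%N) f1 p (k %/ d)).
  apply: eq_big_nat => k /andP[k1 km].
  have k0 : (0 < k)%N by [].
  by rewrite key // (@widen_dvd1 _ k m k0).


under eq_bigr do rewrite big_mkcond /=.
rewrite exchange_big /=; apply: eq_big_nat => d /andP[d1 _].
rewrite -big_mkcond sum_dvd_reindex; last by lia.
by apply: eq_bigr => e _; rewrite mulKn //; lia.
Qed.

Lemma FsG p N : Fs p N = \sum_(1 <= d < N.+1) mobius d * Gs p (N %/ d)%N.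
Proof. by apply: inversion; [exact: GF | rewrite /Fs big_geq]. Qed.
Lemma ordp_frac p a b : (0 < a)%N -> (0 < b)%N ->
  ordp p (a%:R / b%:R) = (logn p a)%:Z - (logn p b)%:Z.
Proof.
move=> a0 b0; set x : rat := a%:R / b%:R.
have bn0 : (b%:R : rat) != 0 by rewrite pnatr_eq0 -lt0n.
have E : numq x * b%:Z = a%:Z * denq x.
  apply: (@intr_inj rat); rewrite !rmorphM /= numqE /x.
  by rewrite -!pmulrn mulrAC divfK.
have x0 : 0 < x by rewrite /x divr_gt0 // ltr0n.
have n0 : (0 < `|numq x|)%N by rewrite absz_gt0 lt0r_neq0 // numq_gt0.
have d0 : (0 < `|denq x|)%N by rewrite absz_gt0 denq_neq0.
have E2 : (`|numq x| * b = a * `|denq x|)%N.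
  by rewrite -[b]/(`|b%:Z|%N) -[a]/(`|a%:Z|%N) -!abszM E.
have L := congr1 (logn p) E2; rewrite !lognM // in L.
rewrite /ordp; lia.
Qed.

Lemma logn_prod p (I : eqType) (r : seq I) (P : pred I) (F : I -> nat) :
  (forall i, i \in r -> P i -> 0 < F i)%N ->
  (logn p (\prod_(i <- r | P i) F i) = \sum_(i <- r | P i) logn p (F i))%N.
Proof.
elim: r => [|x r IH] H; first by rewrite !big_nil logn1.
have H' : forall i, i \in r -> P i -> (0 < F i)%N.
  by move=> i ir; apply: H; rewrite inE ir orbT.
rewrite !big_cons; case: ifP => Px; last exact: IH.
have p0 : (0 < \prod_(i <- r | P i) F i)%N.
  by rewrite big_seq_cond prodn_cond_gt0 // => i /andP[]; exact: H'.
by rewrite lognM ?IH // H // mem_head.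
Qed.

Lemma natz_sum (I : Type) (r : seq I) (P : pred I) (F : I -> nat) :
  ((\sum_(i <- r | P i) F i)%N)%:Z = \sum_(i <- r | P i) (F i)%:Z.
Proof.
elim: r => [|x r IH]; first by rewrite !big_nil.
by rewrite !big_cons; case: ifP => // _; rewrite PoszD IH.
Qed.

Lemma prod_frac (I : Type) (r : seq I) (P : pred I) (f g : I -> nat) :
  \prod_(i <- r | P i) ((f i)%:R / (g i)%:R : rat) =
  (\prod_(i <- r | P i) f i)%:R / (\prod_(i <- r | P i) g i)%:R.
Proof. by rewrite big_split /= prodfV !natr_prod. Qed.

Lemma ordp_gen p m (Q : nat -> nat -> bool) :
  ordp p ((\prod_(1 <= k < m.+1) \prod_(1 <= h < k.+1 | Q h k)
            ((h%:R : rat) / k%:R))^-1) =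
  \sum_(1 <= k < m.+1) \sum_(1 <= h < k.+1 | Q h k) w p h k.
Proof.
have Pk : forall k, (0 < \prod_(1 <= h < k.+1 | Q h k) k)%N.
  by case=> [|k]; [rewrite big_geq | rewrite prodn_cond_gt0].
have Ph : forall k, (0 < \prod_(1 <= h < k.+1 | Q h k) h)%N.
  move=> k; rewrite big_seq_cond prodn_cond_gt0 // => h /andP[].
  by rewrite mem_index_iota => /andP[].
under eq_bigr do rewrite prod_frac.
rewrite prod_frac invf_div ordp_frac ?prodn_gt0 // !logn_prod //.
rewrite !natz_sum -sumrB; apply: eq_big_nat => k /andP[k1 _].
rewrite !logn_prod //; last first.
  by move=> h; rewrite mem_index_iota => /andP[].
rewrite !natz_sum -sumrB //.
Qed.

Lemma v_small p n : prime p -> (0 < n)%N -> (n < p * p)%N -> logn p n = (p %| n)%N.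
Proof.
move=> pp n0 np; case: (boolP (p %| n)%N) => H; last first.
  by rewrite logn_coprime // prime_coprime.
have p0 := prime_gt0 pp.
have En : n = (p * (n %/ p))%N by rewrite mulnC divnK.
have q0 : (0 < n %/ p)%N by rewrite divn_gt0 // dvdn_leq.
have qp : (n %/ p < p)%N by rewrite ltn_divLR.
rewrite En lognM // (logn_prime p pp) eqxx logn_coprime // prime_coprime //.
by apply/negP => /(dvdn_leq q0); rewrite leqNgt qp.
Qed.

Lemma sum_v p k : prime p -> (k < p * p)%N ->
  \sum_(1 <= h < k.+1) (logn p h)%:Z = (k %/ p)%:Z.
Proof.
move=> pp; elim: k => [|k IH] kp; first by rewrite big_geq ?div0n.
rewrite big_nat_recr //= IH; last by apply: ltnW.
by rewrite v_small // divnS ?prime_gt0 // PoszD addrC.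
Qed.

Definition C p m : int := (m %/ p)%:Z * ((p - 1)%:Z - (m %% p)%:Z).

Lemma Gs_closed p m : prime p -> (m < p * p)%N ->
  \sum_(1 <= k < m.+1) \sum_(1 <= h < k.+1) w p h k = C p m.
Proof.
move=> pp; have p0 := prime_gt0 pp.
elim: m => [|m IH] mp; first by rewrite big_geq // /C div0n mul0r.
rewrite big_nat_recr //= IH; last by apply: ltnW.
rewrite /w sumrB sum_v // sumr_const_nat v_small //.
have H1 := divnS m p0; have H2 := modnS m p.
have E1 := divn_eq m p; have E2 := divn_eq m.+1 p.
have r1 := ltn_pmod m p0.
rewrite H1 in E2; rewrite /C H1 H2.
move: E1 E2 r1 mp; set a := (m %/ p)%N; set r := (m %% p)%N => E1 E2 r1 mp.
case: (p %| m.+1)%N E2 => /= E2; rewrite ?mul0rn ?natz ?subn1 /=; nia.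
Qed.


Lemma ordp_Gbar p m : ordp p (Gbar m) = Gs p m.
Proof. exact: (ordp_gen p m (fun _ _ => true)). Qed.

Lemma ordp_Fbar p m : ordp p (Fbar m) = Fs p m.
Proof. exact: (ordp_gen p m (fun h k => coprime h k)). Qed.

Lemma Gs_C p m : prime p -> (m < p * p)%N -> Gs p m = C p m.
Proof. exact: Gs_closed. Qed.

Lemma Mfacts p k : prime p -> (1 <= k <= p - 1)%N ->
  [/\ (((p ^ 2 - 1) %/ k) %/ p = (p - 1) %/ k)%N,
      ((p - 1) %/ k * p <= (p ^ 2 - 1) %/ k)%N,
      ((p ^ 2 - 1) %/ k < ((p - 1) %/ k).+1 * p)%N,
      ((p - 1) %/ k <= p - 1)%N & ((p ^ 2 - 1) %/ k < p * p)%N].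
Proof.
move=> pp /andP[k1 kp]; have p0 := prime_gt0 pp; have k0 : (0 < k)%N by [].
rewrite -mulnn.
set M := ((p * p - 1) %/ k)%N; set q := ((p - 1) %/ k)%N.
have qk : (q * k <= p - 1)%N by rewrite /q leq_divM.
have qk2 : (p - 1 < q.+1 * k)%N by apply: ltn_ceil.
have L : (q * p <= M)%N.
  rewrite leq_divRL //.
  have h : (q * k * p <= (p - 1) * p)%N by apply: leq_mul.
  rewrite mulnAC; apply: (leq_trans h); rewrite mulnBl mul1n.
  by rewrite leq_sub2l.
have U : (M < q.+1 * p)%N.
  rewrite ltn_divLR //.
  have : (p * p <= q.+1 * k * p)%N by rewrite leq_mul2r; apply/orP; right; lia.
  rewrite mulnAC => h; apply: leq_trans h; rewrite subn1 prednK //.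
  by rewrite muln_gt0 p0.
split => //.
- apply/eqP; rewrite eqn_leq; apply/andP; split.
    by rewrite -ltnS ltn_divLR.
  by rewrite leq_divRL.
- by apply: leq_div.
- by rewrite /M ltn_divLR // (leq_trans _ (leq_pmulr _ k0)) // subn1 prednK ?muln_gt0 ?p0.
Qed.

Lemma mob_floor n : (0 < n)%N ->
  \sum_(1 <= d < n.+1) mobius d * (n %/ d)%:Z = 1.
Proof.
move=> n0.
have HG : forall m, (m%:Z : int) =
    \sum_(1 <= d < m.+1) ((0 < m %/ d)%N)%:Z.
  move=> m; rewrite (eq_big_nat _ _ (F2 := fun _ => 1)); last first.
    by move=> d /andP[d1 dm]; rewrite ltnS in dm; rewrite divn_gt0 // dm.
  by rewrite sumr_const_nat subn1 /= natz.
have H := @inversion (fun m => ((0 < m)%N)%:Z) (fun m => m%:Z) HG erefl n.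
by move: H; rewrite /= n0 => <-.
Qed.

Lemma part2 (p : nat) (hp : prime p) (k : nat) : (1 <= k <= p - 1)%N ->
     let a : int := ((p - 1) %/ k)%:Z in
     let b : int := ((p ^ 2 - 1) %/ k)%:Z - (p * ((p - 1) %/ k))%:Z in
     [/\ 0 <= a <= (p - 1)%:Z, 0 <= b <= (p - 1)%:Z,
         ((p ^ 2 - 1) %/ k)%:Z = a * p%:Z + b &
         ordp p (Gbar ((p ^ 2 - 1) %/ k)) = a * ((p - 1)%:Z - b)].
Proof.
move=> hk a b; have [E1 L U qp Mp] := @Mfacts p k hp hk.
have p0 := prime_gt0 hp.
rewrite ordp_Gbar Gs_C // /C E1 /a /b.
have Em := divn_eq ((p ^ 2 - 1) %/ k) p; rewrite E1 in Em.
move: E1 L U qp Mp Em; set M := ((p ^ 2 - 1) %/ k)%N; set q := ((p - 1) %/ k)%N.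
set r := (M %% p)%N => E1 L U qp Mp Em.
split.
- by apply/andP; split; lia.
- by apply/andP; split; nia.
- by nia.
- by congr (_ * _); nia.
Qed.

Theorem theorem4p8 (p : nat) (hp : prime p) (hp3 : (3 <= p)%N) :
  (* (1) *)
  ordp p (Fbar (p ^ 2 - 1)) =
    \sum_(1 <= k < p) mobius k * ordp p (Gbar ((p ^ 2 - 1) %/ k))
  /\
  (* (2) *)
  (forall k : nat, (1 <= k <= p - 1)%N ->
     let a : int := ((p - 1) %/ k)%:Z in
     let b : int := ((p ^ 2 - 1) %/ k)%:Z - (p * ((p - 1) %/ k))%:Z in
     [/\ 0 <= a <= (p - 1)%:Z, 0 <= b <= (p - 1)%:Z,
         ((p ^ 2 - 1) %/ k)%:Z = a * p%:Z + b &
         ordp p (Gbar ((p ^ 2 - 1) %/ k)) = a * ((p - 1)%:Z - b)])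
  /\
  (* (3) *)
  ordp p (Fbar (p ^ 2 - 1)) =
    (p - 1)%:Z
    - \sum_(1 <= k < p) mobius k * ((p - 1) %/ k)%:Z
        * (((p ^ 2 - 1) %/ k)%:Z - (p * ((p - 1) %/ k))%:Z).
Proof.
have p0 := prime_gt0 hp.
have Np : (p ^ 2 - 1 < p * p)%N by rewrite -mulnn subn1 prednK ?muln_gt0 ?p0.
have pN : (p <= (p ^ 2 - 1).+1)%N by rewrite -mulnn subn1 prednK ?muln_gt0 ?p0 ?leq_pmulr.
have P1 : ordp p (Fbar (p ^ 2 - 1)) =
    \sum_(1 <= k < p) mobius k * ordp p (Gbar ((p ^ 2 - 1) %/ k)).
  rewrite ordp_Fbar FsG (big_cat_nat _ (n := p)) //=.
  rewrite [X in _ + X]big1_seq ?addr0.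
    by apply: eq_bigr => k _; rewrite ordp_Gbar.
  move=> d /andP[_]; rewrite mem_index_iota => /andP[pd dN].
  have d0 : (0 < d)%N by apply: leq_trans pd.
  have Ld : ((p ^ 2 - 1) %/ d < p)%N.
    by rewrite ltn_divLR // (leq_trans Np) // leq_mul2l pd orbT.
  rewrite Gs_C //; last by apply: (leq_trans Ld); rewrite leq_pmulr.
  by rewrite /C divn_small // mul0r mulr0.
split; first exact: P1.
split; first by move=> k hk; exact: part2.
rewrite P1.
transitivity (\sum_(1 <= k < p) ((p - 1)%:Z * (mobius k * ((p - 1) %/ k)%:Z)
   - mobius k * ((p - 1) %/ k)%:Z
        * (((p ^ 2 - 1) %/ k)%:Z - (p * ((p - 1) %/ k))%:Z))).
  apply: eq_big_nat => k /andP[k1 kp].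
  have hk : (1 <= k <= p - 1)%N by apply/andP; split => //; lia.
  case: (@part2 p hp k hk) => _ _ _ ->; ring.
rewrite sumrB -mulr_sumr.
have E : (p - 1).+1 = p by lia.
have := @mob_floor (p - 1) _; rewrite E => ->; last by lia.
by rewrite mulr1.
Qed.
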